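(* Define integers $a(n)$ by $\sum_{n\ge0}a(n)q^n=\frac{f_1f_6}{f_2^2f_3}$. Then for all $n\geq 0$, $a(24n+13)\equiv 0\pmod 2$.
   Context: For a positive integer $r$, $f_r=\prod_{k\geq1}(1-q^{rk})$, a formal power series in $q$. *)

(* Defs.v *)
(* Formal power series over int are represented as
   coefficient sequences nat -> int with the Cauchy product. *)
From mathcomp Require Import all_boot all_algebra.
Set Implicit Arguments. Unset Strict Implicit. Unset Printing Implicit Defensive.
Import GRing.Theory.
Local Open Scope ring_scope.

Definition smul (a b : nat -> int) : nat -> int :=
  fun n => \sum_(i < n.+1) a i * b (n - i)%N.

(* f_r = prod_{k>=1} (1 - q^{r k}); its n-th coefficient equals the n-th
   coefficient of the finite product over 1 <= k <= n+1 (the remaining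
   factors are 1 + O(q^{r k}) with r k > n when r >= 1). *)
Definition fr (r : nat) : nat -> int :=
  fun n => (\prod_(k < n.+1) (1 - 'X^(r * k.+1)%N) : {poly int})`_n.

(* Main.v *)
Require Import Defs.
From mathcomp Require Import all_boot all_algebra.
From mathcomp Require Import zify ring.
Set Implicit Arguments. Unset Strict Implicit. Unset Printing Implicit Defensive.
Import GRing.Theory.

Module Mod_A.
Local Open Scope ring_scope.

Section Gen.
Variable R : comRingType.
Implicit Types p q u : {poly R}.

Definition eqN N p q := forall i, (i < N)%N -> p`_i = q`_i.

Lemma eqN_refl N p : eqN N p p. Proof. by []. Qed.
Lemma eqN_sym N p q : eqN N p q -> eqN N q p. Proof. by move=> h i /h. Qed.
Lemma eqN_trans N p q r : eqN N p q -> eqN N q r -> eqN N p r.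
Proof. by move=> h1 h2 i hi; rewrite h1 // h2. Qed.
Lemma eqN_le N M p q : (M <= N)%N -> eqN N p q -> eqN M p q.
Proof. by move=> hM h i hi; apply: h; apply: leq_trans hM. Qed.
Lemma eqN_add N p q p' q' : eqN N p p' -> eqN N q q' -> eqN N (p + q) (p' + q').
Proof. by move=> h1 h2 i hi; rewrite !coefD h1 // h2. Qed.
Lemma eqN_opp N p q : eqN N p q -> eqN N (- p) (- q).
Proof. by move=> h i hi; rewrite !coefN h. Qed.
Lemma eqN_mul N p q p' q' : eqN N p p' -> eqN N q q' -> eqN N (p * q) (p' * q').
Proof.
move=> h1 h2 i hi; rewrite !coefM; apply: eq_bigr => j _.
have hj : (j <= i)%N by rewrite -ltnS.
rewrite h1; last by apply: leq_ltn_trans hi.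
by rewrite h2 //; apply: leq_ltn_trans hi; apply: leq_subr.
Qed.
Lemma eqN_comp N r p q : (0 < r)%N -> eqN N p q -> eqN N (p \Po 'X^r) (q \Po 'X^r).
Proof.
move=> hr h i hi; rewrite !coef_comp_poly_Xn //; case: ifP => // _.
by apply: h; apply: leq_ltn_trans hi; apply: leq_div.
Qed.

Lemma eqN_cancel N p q u : u`_0 = 1 -> eqN N (p * u) (q * u) -> eqN N p q.
Proof.
move=> u0 h; elim: N h => [|N IH] h; first by [].
have h' : eqN N p q by apply: IH; apply: eqN_le h.
move=> i; rewrite ltnS leq_eqVlt => /orP [/eqP ->|]; last exact: h'.
have := h N (ltnSn N); rewrite !coefM !big_ord_recr /= subnn u0 !mulr1.
have -> : \sum_(i0 < N) p`_i0 * u`_(N - i0) = \sum_(i0 < N) q`_i0 * u`_(N - i0).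
  by apply: eq_bigr => j _; rewrite h'.
by move/addrI.
Qed.

Definition sect (m r : nat) p : {poly R} := \poly_(i < size p) p`_(m * i + r).

Lemma coef_sect m r p i : (0 < m)%N -> (sect m r p)`_i = p`_(m * i + r).
Proof.
move=> hm; rewrite coef_poly; case: ifP => // /negbT; rewrite -leqNgt => hi.
rewrite nth_default //; apply: leq_trans hi _; apply: leq_trans (leq_addr _ _).
by rewrite leq_pmull.
Qed.

Lemma sect_mul m r p q i : (0 < m)%N -> (r < m)%N ->
  (p * (q \Po 'X^m))`_(m * i + r) = (sect m r p * q)`_i.
Proof.
move=> hm hr; elim/poly_ind: q i => [|q c IH] i.
  by rewrite comp_poly0 !mulr0 !coef0.
rewrite comp_polyD comp_polyM comp_polyX comp_polyC mulrDr mulrA coefD coefMXn.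
rewrite mulrDr mulrA coefD coefMX !coefMC coef_sect //.
case: i => [|i]; first by rewrite muln0 add0n hr.
rewrite /= -IH; congr (_ + _).
by rewrite ifF; [congr (_`_ _); lia | lia].
Qed.

Lemma coef_trunc p e i : (i < e)%N -> (p * (1 - 'X^e))`_i = p`_i.
Proof. by move=> hi; rewrite mulrBr mulr1 coefB coefMXn hi subr0. Qed.

End Gen.

End Mod_A.
Import Mod_A.

Module Mod_B.
Local Open Scope ring_scope.

Notation F2 := 'F_2.
Lemma two0 : (2%:R : F2) = 0. Proof. by apply/eqP. Qed.
Lemma two0p : (2%:R : {poly F2}) = 0. Proof. by rewrite -polyC_natr two0. Qed.
Lemma addpp (p : {poly F2}) : p + p = 0.
Proof. by rewrite -mulr2n -mulr_natr two0p mulr0. Qed.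
Lemma opp2 (p : {poly F2}) : - p = p.
Proof. by apply/eqP; rewrite eq_sym -subr_eq0 opprK addpp. Qed.
Lemma sqrD2 (p q : {poly F2}) : (p + q) ^+ 2 = p ^+ 2 + q ^+ 2.
Proof. by rewrite sqrrD -mulr_natr two0p mulr0 addr0. Qed.

Lemma sqr_sum2 (I : Type) (r : seq I) (P : pred I) (f : I -> {poly F2}) :
  (\sum_(i <- r | P i) f i) ^+ 2 = \sum_(i <- r | P i) (f i) ^+ 2.
Proof.
apply: (big_morph (fun x : {poly F2} => x ^+ 2)); last by rewrite expr0n.
by move=> x y; rewrite sqrD2.
Qed.

Lemma sqr_prod2 (I : Type) (r : seq I) (P : pred I) (f : I -> {poly F2}) :
  (\prod_(i <- r | P i) f i) ^+ 2 = \prod_(i <- r | P i) (f i) ^+ 2.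
Proof.
apply: (big_morph (fun x : {poly F2} => x ^+ 2)); last by rewrite expr1n.
by move=> x y; rewrite exprMn.
Qed.

Fixpoint tri k := if k is k'.+1 then (tri k' + k)%N else 0%N.
Lemma tri2 k : (2 * tri k = k * k.+1)%N.
Proof. elim: k => //= k IH; lia. Qed.

Definition G n k : {poly F2} :=
  'X^(k * n + tri k) * \prod_(k.+1 <= i < n.+1) (1 + 'X^i).
Definition S n := \sum_(k < n.+1) G n k.
Definition A n k : {poly F2} :=
  'X^(tri k + k * n) * \prod_(k <= i < n.+1) (1 + 'X^i).

Lemma GA n k : (k <= n)%N -> G n.+1 k + G n k = A n k + A n k.+1.
Proof.
move=> hk; rewrite /G /A big_nat_recr /= ?ltnS //.
rewrite (@big_ltn _ _ _ k) ?ltnS //.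
set Q := \prod_(k.+1 <= i < n.+1) _.
have e1 : (k * n.+1 + tri k = (tri k + k * n) + k)%N by lia.
have e2 : (tri k.+1 + k.+1 * n = (tri k + k * n) + k + n.+1)%N by rewrite /=; lia.
have e3 : (k * n + tri k = tri k + k * n)%N by lia.
rewrite e1 e2 e3 !exprD; ring.
Qed.

Lemma S_step n : S n.+1 = S n + 'X^(n.+1 * n.+1 + tri n.+1) + 'X^(tri n.+1 + n.+1 * n).
Proof.
rewrite /S big_ord_recr /=.
have -> : \sum_(i < n.+1) G n.+1 i = \sum_(i < n.+1) G n i + \sum_(i < n.+1) (G n.+1 i + G n i).
  by rewrite big_split /= addrCA addpp addr0.
have -> : \sum_(i < n.+1) (G n.+1 i + G n i) = \sum_(i < n.+1) (A n i.+1 - A n i).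
  apply: eq_bigr => i _; rewrite GA; last by rewrite -ltnS.
  by rewrite opp2 addrC.
have T := @telescope_sumr _ 0 n.+1 (fun i => A n i) (leq0n _); rewrite big_mkord in T; rewrite T.
have -> : A n 0 = 0.
  by rewrite /A big_ltn // expr0 addpp mul0r mulr0.
rewrite subr0.
have -> : G n.+1 n.+1 = 'X^(n.+1 * n.+1 + tri n.+1).
  by rewrite /G big_geq // mulr1.
have -> : A n n.+1 = 'X^(tri n.+1 + n.+1 * n).
  by rewrite /A big_geq // mulr1.
by rewrite -!addrA [X in _ + X]addrC.
Qed.

End Mod_B.
Import Mod_B.

Module Mod_C.
Local Open Scope ring_scope.

Definition Pp j := (j * j + tri j)%N.
Definition Pm j := (tri j + j * j.-1)%N.

Lemma S_closed n : S n = 1 + \sum_(1 <= j < n.+1) ('X^(Pp j) + 'X^(Pm j)).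
Proof.
elim: n => [|n IH].
  by rewrite /S big_ord1 /G big_geq // big_geq // mulr1 addr0.
by rewrite S_step IH [in RHS]big_nat_recr //= -!addrA.
Qed.

Definition e x := ((x ^ 2 - 1) %/ 24)%N.
Lemma e_val x y : (x ^ 2 = 24 * y + 1)%N -> e x = y.
Proof. by move=> h; rewrite /e h addnK mulKn. Qed.

Definition Er B r : {poly F2} := \sum_(x < B | coprime x 6) 'X^(r * e x).

Lemma cop6 n k : coprime (6 * n + k) 6 = coprime k 6.
Proof. by rewrite -coprime_modl mulnC modnMDl coprime_modl. Qed.

Lemma Er_shanks n : Er (6 * n + 2) 1 = 1 + \sum_(1 <= j < n.+1) ('X^(Pp j) + 'X^(Pm j)).
Proof.
rewrite /Er -(big_mkord (fun x => coprime x 6) (fun x => 'X^(1 * e x))) big_mkcond /=.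
elim: n => [|n IH].
  rewrite [in RHS]big_geq // addr0 big_nat_recr //= big_nat_recr //= big_geq //.
  by rewrite !add0r (_ : e 1 = 0%N) // expr0.
have -> : (6 * n.+1 + 2 = (6 * n + 2).+4.+2)%N by lia.
do 6! rewrite [in LHS]big_nat_recr //=. rewrite IH [in RHS]big_nat_recr //=.
rewrite -!addnS !cop6 /= !addr0 !mul1n.
have h5 : e (6 * n + 5) = Pm n.+1.
  apply: e_val; rewrite /Pm /=; have := tri2 n.+1; rewrite /= => h; nia.
have h7 : e (6 * n + 7) = Pp n.+1.
  apply: e_val; rewrite /Pp /=; have := tri2 n.+1; rewrite /= => h; nia.
rewrite h5 h7 -!addrA; congr (_ + (_ + _)); exact: addrC.
Qed.

Lemma euler n : eqN n.+1 (\prod_(k < n) (1 - 'X^(k.+1))) (Er (6 * n + 2) 1).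
Proof.
rewrite Er_shanks -S_closed /S big_ord_recl => i hi.
rewrite coefD coef_sum [X in _ = _ + X]big1 ?addr0; last first.
  move=> k _; rewrite /G coefXnM ifT //= /bump /=; lia.
rewrite /G /= mul0n add0n expr0 mul1r big_add1 /= big_mkord.
by under eq_bigr => k _ do rewrite opp2.
Qed.

End Mod_C.
Import Mod_C.

Module Mod_D.
Local Open Scope ring_scope.

Lemma natF2 k : (k%:R : F2) = (odd k)%:R.
Proof.
rewrite {1}(divn_eq k 2) natrD natrM two0 mulr0 add0r modn2.
by case: (odd k).
Qed.

Lemma coef_sumX (I : finType) (P : pred I) (f : I -> nat) m :
  (\sum_(i | P i) 'X^(f i) : {poly F2})`_m = #|[set i | P i & f i == m]|%:R.
Proof.
rewrite coef_sum.
under eq_bigr do rewrite coefXn.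
rewrite -[in RHS]sum1_card natr_sum.
have -> : \sum_(i | P i) ((m == f i)%:R : F2) = \sum_(i | P i) (if f i == m then 1 else 0).
  by apply: eq_bigr => i _; rewrite eq_sym; case: (f i == m).
rewrite -big_mkcondr /=.
by apply: eq_bigl => i; rewrite inE.
Qed.

Lemma mul_sumX (I J : finType) (P : pred I) (Q : pred J) (f : I -> nat) (g : J -> nat) :
  (\sum_(i | P i) 'X^(f i) : {poly F2}) * (\sum_(j | Q j) 'X^(g j)) =
  \sum_(z : I * J | P z.1 && Q z.2) 'X^(f z.1 + g z.2).
Proof.
rewrite big_distrl /=.
under eq_bigr do rewrite big_distrr /=.
rewrite (pair_big_dep P (fun _ => Q)) /=.
by apply: eq_bigr => z _; rewrite exprD.
Qed.


Lemma invol_parity (T : finType) (A : {set T}) (g : T -> T) :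
  {in A, forall x, g x \in A} -> {in A, forall x, g (g x) = x} ->
  odd #|A| = odd #|[set x in A | g x == x]|.
Proof.
move: {2}#|A| (leqnn #|A|) => n; elim: n A => [|n IH] A hn h1 h2.
  move: hn; rewrite leqn0 cards_eq0 => /eqP ->.
  by congr (odd _); apply: eq_card => x; rewrite !inE.
case: (pickP [pred x in A | g x != x]) => [x /andP[xA gx] | none]; last first.
  congr (odd _); apply: eq_card => y; rewrite !inE.
  case yA: (y \in A) => //=; have := none y; rewrite /= yA /= => /negbFE.
  by move=> ->.
set A' := A :\: [set x; g x].
have gxA : g x \in A by apply: h1.
have sub : [set x; g x] \subset A by apply/subsetP => y; rewrite !inE => /orP[] /eqP ->.
have cA : #|A| = (#|A'| + 2)%N.
  rewrite /A' cardsD (setIidPr sub) cards2 eq_sym gx.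
  have := subset_leq_card sub; rewrite cards2 eq_sym gx => h; lia.
have hA' : {in A', forall y, g y \in A'}.
  move=> y; rewrite !inE => /andP[/norP[yx ygx] yA]; rewrite h1 // andbT.
  apply/norP; split.
    by apply: contra ygx => /eqP <-; rewrite h2.
  by apply: contra yx => /eqP h; rewrite -(h2 y yA) h h2.
have hA2 : {in A', forall y, g (g y) = y}.
  by move=> y; rewrite !inE => /andP[_ yA]; apply: h2.
rewrite cA oddD /= addbF (IH A' _ hA' hA2); last first.
  by move: hn; rewrite cA; lia.
congr (odd _); apply: eq_card => y; rewrite !inE.
case: (boolP (g y == y)) => fy; rewrite ?andbF ?andbT //.
case: (y =P x) => [yx | _]; first by move: fy; rewrite yx (negbTE gx).
case: (y =P g x) => [yg | _] //=.
move: fy; rewrite yg h2 // => /eqP h; by rewrite -h eqxx in gx.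
Qed.

Lemma invol_nat (b : nat) (P : nat -> nat -> bool) (h : nat -> nat -> nat * nat) :
  (forall x y, P x y -> [/\ ((h x y).1 < b.+1)%N, ((h x y).2 < b.+1)%N,
      P (h x y).1 (h x y).2 & h (h x y).1 (h x y).2 = (x, y)]) ->
  odd #|[set z : 'I_b.+1 * 'I_b.+1 | P z.1 z.2]| =
  odd #|[set z : 'I_b.+1 * 'I_b.+1 | P z.1 z.2 && (h z.1 z.2 == (val z.1, val z.2))]|.
Proof.
move=> H.
pose g (z : 'I_b.+1 * 'I_b.+1) : 'I_b.+1 * 'I_b.+1 :=
  (inord (h z.1 z.2).1, inord (h z.1 z.2).2).
have gv (z : 'I_b.+1 * 'I_b.+1) : P z.1 z.2 -> val (g z).1 = (h z.1 z.2).1 /\ val (g z).2 = (h z.1 z.2).2.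
  by move=> /H [h1 h2 _ _]; rewrite /= !inordK.
rewrite (@invol_parity _ _ g).
- congr (odd _); apply: eq_card => z; rewrite !inE.
  case Pz: (P z.1 z.2) => //=.
  have [e1 e2] := gv z Pz.
  apply/eqP/eqP => [gz | hz].
    by move: e1 e2; rewrite gz; case: (h _ _) => a c /= -> ->.
  by case: z Pz e1 e2 hz => [z1 z2] /= _ e1 e2 hz; congr pair; apply: val_inj;
     rewrite /= ?e1 ?e2 hz.
- move=> z; rewrite !inE => Pz; have [e1 e2] := gv z Pz.
  by rewrite e1 e2; case: (H _ _ Pz).
- move=> z; rewrite !inE => Pz; have [e1 e2] := gv z Pz.
  have [_ _ _ hh] := H _ _ Pz.
  have Pg : P (g z).1 (g z).2 by rewrite e1 e2; case: (H _ _ Pz).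
  have [e1' e2'] := gv _ Pg.
  by apply: injective_projections; apply: val_inj; rewrite ?e1' ?e2' e1 e2 hh.
Qed.

End Mod_D.
Import Mod_D.

Module Mod_E.

Lemma cop6E x : coprime x 6 = odd x && ~~ (3 %| x).
Proof.
rewrite (_ : 6 = 2 * 3)%N // coprimeMr coprimen2; congr (_ && _).
by rewrite coprime_sym prime_coprime.
Qed.

Lemma sq8 x : (x ^ 2 %% 8 = if odd x then 1 else if x %% 4 == 2 then 4 else 0)%N.
Proof.
rewrite -modnXm.
have e1 : odd x = odd (x %% 8) by lia.
have e2 : (x %% 4 == 2) = ((x %% 8) %% 4 == 2) by lia.
rewrite e1 e2; have : (x %% 8 < 8)%N by rewrite ltn_pmod.
move: (x %% 8) => r; do 8! (case: r => [|r] //).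
Qed.

Lemma sq3 x : (x ^ 2 %% 3 = if 3 %| x then 0 else 1)%N.
Proof.
rewrite -modnXm.
have e1 : (3 %| x) = (3 %| x %% 3) by lia.
rewrite e1; have : (x %% 3 < 3)%N by rewrite ltn_pmod.
move: (x %% 3) => r; do 3! (case: r => [|r] //).
Qed.

Lemma sq9 x : 3 %| x -> (x ^ 2 %% 9 = 0)%N.
Proof. by case/dvdnP => k ->; apply/eqP; rewrite -/(dvdn 9 _) expnMn dvdn_mull. Qed.

Lemma sq24 x : coprime x 6 -> (x ^ 2 = 24 * e x + 1)%N.
Proof.
rewrite cop6E => h.
have h24 : (x ^ 2 %% 24 = 1)%N.
  rewrite -modnXm.
  have e1 : odd x && ~~ (3 %| x) = odd (x %% 24) && ~~ (3 %| x %% 24) by lia.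
  move: h; rewrite e1; have : (x %% 24 < 24)%N by rewrite ltn_pmod.
  move: (x %% 24) => r; do 24! (case: r => [|r] //).
rewrite /e {1 2}(divn_eq (x ^ 2) 24) h24 addnK mulnK // mulnC.
by [].
Qed.

End Mod_E.
Import Mod_E.

Module Mod_F.

Lemma sq_lt x B : (x ^ 2 < B ^ 2)%N -> (x < B)%N.
Proof. by rewrite ltn_exp2r. Qed.

Lemma P2_of m b x y : (72 * m + 3 < b.+1 ^ 2)%N -> (x ^ 2 + 2 * y ^ 2 = 72 * m + 3)%N ->
  [/\ coprime x 6, coprime y 6, (e x + 2 * e y = 3 * m)%N, (x < b.+1)%N & (y < b.+1)%N].
Proof.
move=> hb hM.
have hx8 := sq8 x; have hy8 := sq8 y; have hx3 := sq3 x; have hy3 := sq3 y.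
have hx9 := @sq9 x; have hy9 := @sq9 y.
have cx : coprime x 6.
  rewrite cop6E; move: hx8 hy8 hx3 hy3 hx9 hy9 hM; move: (x ^ 2) (y ^ 2) => s t.
  case: (odd x); case: (odd y); case: (x %% 4 == 2); case: (y %% 4 == 2);
  case: (3 %| x); case: (3 %| y) => /=; lia.
have cy : coprime y 6.
  rewrite cop6E; move: hx8 hy8 hx3 hy3 hx9 hy9 hM; move: (x ^ 2) (y ^ 2) => s t.
  case: (odd x); case: (odd y); case: (x %% 4 == 2); case: (y %% 4 == 2);
  case: (3 %| x); case: (3 %| y) => /=; lia.
split => //.
- have := sq24 cx; have := sq24 cy; move: hM; move: (x ^ 2) (y ^ 2) => s t; lia.
- apply: sq_lt; apply: leq_ltn_trans hb; lia.
- apply: sq_lt; apply: leq_ltn_trans hb; lia.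
Qed.

Definition ad a b := (a - b + (b - a))%N.
Definition h2 x y : nat * nat :=
  if 3 %| x + 2 * y then (ad (4 * y) x %/ 3, (2 * x + y) %/ 3)
  else ((4 * y + x) %/ 3, ad y (2 * x) %/ 3).
Definition P2 m x y := coprime x 6 && coprime y 6 && (e x + 2 * e y == 3 * m)%N.

Lemma h2_ok m b x y : (72 * m + 3 < b.+1 ^ 2)%N -> P2 m x y ->
  [/\ ((h2 x y).1 < b.+1)%N, ((h2 x y).2 < b.+1)%N, P2 m (h2 x y).1 (h2 x y).2
    & h2 (h2 x y).1 (h2 x y).2 = (x, y)].
Proof.
move=> hb /andP[/andP[cx cy] /eqP he].
have hM : (x ^ 2 + 2 * y ^ 2 = 72 * m + 3)%N.
  have := sq24 cx; have := sq24 cy; move: (x ^ 2) (y ^ 2) => s t; lia.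
rewrite cop6E in cx; rewrite cop6E in cy.
have fin : forall x' y', (x' ^ 2 + 2 * y' ^ 2 = x ^ 2 + 2 * y ^ 2)%N ->
   [/\ (x' < b.+1)%N, (y' < b.+1)%N, P2 m x' y' & odd x' && ~~ (3 %| x') && odd y' && ~~ (3 %| y')].
  move=> x' y' hsq; rewrite -hsq in hM.
  have [c1 c2 c3 c4 c5] := P2_of hb hM.
  split => //; first by rewrite /P2 c1 c2 c3 eqxx.
  by move: c1 c2; rewrite !cop6E => -> ->.
move: cx cy => /andP[ox tx] /andP[oy ty].
rewrite /h2 /ad; case: ifP => d.
- case: (leqP x (4 * y)) => c.
  + have ex : (3 * ((4 * y - x + (x - 4 * y)) %/ 3) = 4 * y - x)%N by clear -d c tx ty; lia.
    have ey : (3 * ((2 * x + y) %/ 3) = 2 * x + y)%N by clear -d c tx ty; lia.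
    move: ex ey; move: ((4 * y - x + (x - 4 * y)) %/ 3) ((2 * x + y) %/ 3) => u v ex ey.
    have [f1 f2 f3 /andP[/andP[/andP[f4 f5] f6] f7]] : [/\ (u < b.+1)%N, (v < b.+1)%N, P2 m u v & odd u && ~~ (3 %| u) && odd v && ~~ (3 %| v)].
      by apply: fin; clear -ex ey c; nia.
    split => //; clear -ex ey c d f4 f5 f6 f7 ox tx oy ty.
    rewrite /=; case: ifP => d'; congr pair; lia.
  + have ex : (3 * ((4 * y - x + (x - 4 * y)) %/ 3) = x - 4 * y)%N by clear -d c tx ty; lia.
    have ey : (3 * ((2 * x + y) %/ 3) = 2 * x + y)%N by clear -d c tx ty; lia.
    move: ex ey; move: ((4 * y - x + (x - 4 * y)) %/ 3) ((2 * x + y) %/ 3) => u v ex ey.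
    have [f1 f2 f3 /andP[/andP[/andP[f4 f5] f6] f7]] : [/\ (u < b.+1)%N, (v < b.+1)%N, P2 m u v & odd u && ~~ (3 %| u) && odd v && ~~ (3 %| v)].
      by apply: fin; clear -ex ey c; nia.
    split => //; clear -ex ey c d f4 f5 f6 f7 ox tx oy ty.
    rewrite /=; case: ifP => d'; congr pair; lia.
- case: (leqP (2 * x) y) => c.
  + have ex : (3 * ((4 * y + x) %/ 3) = 4 * y + x)%N by clear -d c tx ty; lia.
    have ey : (3 * ((y - 2 * x + (2 * x - y)) %/ 3) = y - 2 * x)%N by clear -d c tx ty; lia.
    move: ex ey; move: ((4 * y + x) %/ 3) ((y - 2 * x + (2 * x - y)) %/ 3) => u v ex ey.
    have [f1 f2 f3 /andP[/andP[/andP[f4 f5] f6] f7]] : [/\ (u < b.+1)%N, (v < b.+1)%N, P2 m u v & odd u && ~~ (3 %| u) && odd v && ~~ (3 %| v)].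
      by apply: fin; clear -ex ey c; nia.
    split => //; clear -ex ey c d f4 f5 f6 f7 ox tx oy ty.
    rewrite /=; case: ifP => d'; congr pair; lia.
  + have ex : (3 * ((4 * y + x) %/ 3) = 4 * y + x)%N by clear -d c tx ty; lia.
    have ey : (3 * ((y - 2 * x + (2 * x - y)) %/ 3) = 2 * x - y)%N by clear -d c tx ty; lia.
    move: ex ey; move: ((4 * y + x) %/ 3) ((y - 2 * x + (2 * x - y)) %/ 3) => u v ex ey.
    have [f1 f2 f3 /andP[/andP[/andP[f4 f5] f6] f7]] : [/\ (u < b.+1)%N, (v < b.+1)%N, P2 m u v & odd u && ~~ (3 %| u) && odd v && ~~ (3 %| v)].
      by apply: fin; clear -ex ey c; nia.
    split => //; clear -ex ey c d f4 f5 f6 f7 ox tx oy ty.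
    rewrite /=; case: ifP => d'; congr pair; lia.
Qed.

Lemma h2_fix m x y : P2 m x y -> (h2 x y == (x, y)) = (x == y).
Proof.
move=> /andP[/andP[cx cy] _]; rewrite cop6E in cx; rewrite cop6E in cy.
move: cx cy => /andP[ox tx] /andP[oy ty].
rewrite /h2 /ad; case: ifP => d; apply/eqP/eqP => [h|h].
- by case: h => h1 h3; lia.
- by subst y; congr pair; lia.
- by case: h => h1 h3; lia.
- by subst y; lia.
Qed.


End Mod_F.
Import Mod_F.

Module Mod_G.
Local Open Scope ring_scope.

Lemma S2 m b : (72 * m + 3 < b.+1 ^ 2)%N ->
  (Er b.+1 1 * Er b.+1 2)`_(3 * m) = (Er b.+1 1)`_m.
Proof.
move=> hb; rewrite /Er mul_sumX !coef_sumX natF2 [in RHS]natF2; congr (_%:R).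
have -> : [set z : 'I_b.+1 * 'I_b.+1 | coprime z.1 6 && coprime z.2 6 & (1 * e z.1 + 2 * e z.2 == 3 * m)%N]
        = [set z : 'I_b.+1 * 'I_b.+1 | P2 m z.1 z.2].
  by apply/setP => z; rewrite !inE /P2 mul1n.
rewrite (@invol_nat b (P2 m) h2); last by move=> x y; apply: h2_ok.
have -> : [set z : 'I_b.+1 * 'I_b.+1 | P2 m z.1 z.2 && (h2 z.1 z.2 == (val z.1, val z.2))]
        = (fun x => (x, x)) @: [set x : 'I_b.+1 | coprime x 6 & (1 * e x == m)%N].
  apply/setP => -[z1 z2]; rewrite !inE /=.
  case: (boolP (P2 m z1 z2)) => hP /=.
    rewrite (h2_fix hP); apply/eqP/imsetP => [e12 | [x hx [-> ->]] //].
    have e21 : z2 = z1 by apply: val_inj.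
    exists z1; last by rewrite e21.
    move: hP; rewrite e21 inE /P2 => /andP[/andP[-> _] /eqP h].
    by rewrite /= mul1n; apply/eqP; lia.
  apply/esym/imsetP => -[x hx [e1 e2]]; move: hP; rewrite e1 e2 /P2.
  by move: hx; rewrite inE => /andP[-> /eqP h]; rewrite /= mul1n in h; rewrite h; apply/negP; rewrite negbK eqE /=; lia.
rewrite card_imset //; move=> x y [] //.
Qed.

End Mod_G.
Import Mod_G.

Module Mod_H.

Definition h1 x y : nat * nat :=
  if 3 %| x + y then ((x + 3 * y) %/ 2, ad x y %/ 2)
  else (ad x (3 * y) %/ 2, (x + y) %/ 2).
Definition PW K x y := (odd x == odd y) && ~~ (3 %| y) && (x ^ 2 + 3 * y ^ 2 == 4 * K).

Lemma PW_x3 m x y : PW (24 * m + 7) x y -> ~~ (3 %| x).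
Proof.
move=> /andP[_ /eqP h]; have := sq3 x; move: h; move: (x ^ 2) (y ^ 2) => s t.
case: (3 %| x) => /=; lia.
Qed.

Lemma PW_of m b x y : (4 * (24 * m + 7) < b.+1 ^ 2)%N ->
  (x ^ 2 + 3 * y ^ 2 = 4 * (24 * m + 7))%N -> (odd x == odd y) -> ~~ (3 %| y) ->
  [/\ (x < b.+1)%N, (y < b.+1)%N & PW (24 * m + 7) x y].
Proof.
move=> hb h o t; split.
- by apply: sq_lt; apply: leq_ltn_trans hb; lia.
- by apply: sq_lt; apply: leq_ltn_trans hb; lia.
- by rewrite /PW o t h eqxx.
Qed.

Lemma h1_ok m b x y : (4 * (24 * m + 7) < b.+1 ^ 2)%N -> PW (24 * m + 7) x y ->
  [/\ ((h1 x y).1 < b.+1)%N, ((h1 x y).2 < b.+1)%N, PW (24 * m + 7) (h1 x y).1 (h1 x y).2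
    & h1 (h1 x y).1 (h1 x y).2 = (x, y)].
Proof.
move=> hb hP; have tx := PW_x3 hP.
move: hP => /andP[/andP[/eqP o ty] /eqP hM].
rewrite /h1 /ad; case: ifP => d.
- case: (leqP y x) => c.
  + have ex : (2 * ((x + 3 * y) %/ 2) = x + 3 * y)%N by clear -o; lia.
    have ey : (2 * ((x - y + (y - x)) %/ 2) = x - y)%N by clear -o c; lia.
    move: ex ey; move: ((x + 3 * y) %/ 2) ((x - y + (y - x)) %/ 2) => u v ex ey.
    have [f1 f2 f3] : [/\ (u < b.+1)%N, (v < b.+1)%N & PW (24 * m + 7) u v].
      apply: PW_of => //; first by rewrite -hM; clear -ex ey c; nia.
      by clear -ex ey c o; lia.
      by clear -ex ey c d tx ty; lia.
    split => //; clear -ex ey c d o tx ty.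
    rewrite /=; case: ifP => d'; congr pair; lia.
  + have ex : (2 * ((x + 3 * y) %/ 2) = x + 3 * y)%N by clear -o; lia.
    have ey : (2 * ((x - y + (y - x)) %/ 2) = y - x)%N by clear -o c; lia.
    move: ex ey; move: ((x + 3 * y) %/ 2) ((x - y + (y - x)) %/ 2) => u v ex ey.
    have [f1 f2 f3] : [/\ (u < b.+1)%N, (v < b.+1)%N & PW (24 * m + 7) u v].
      apply: PW_of => //; first by rewrite -hM; clear -ex ey c; nia.
      by clear -ex ey c o; lia.
      by clear -ex ey c d tx ty; lia.
    split => //; clear -ex ey c d o tx ty.
    rewrite /=; case: ifP => d'; congr pair; lia.
- case: (leqP (3 * y) x) => c.
  + have ex : (2 * ((x - 3 * y + (3 * y - x)) %/ 2) = x - 3 * y)%N by clear -o c; lia.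
    have ey : (2 * ((x + y) %/ 2) = x + y)%N by clear -o; lia.
    move: ex ey; move: ((x - 3 * y + (3 * y - x)) %/ 2) ((x + y) %/ 2) => u v ex ey.
    have [f1 f2 f3] : [/\ (u < b.+1)%N, (v < b.+1)%N & PW (24 * m + 7) u v].
      apply: PW_of => //; first by rewrite -hM; clear -ex ey c; nia.
      by clear -ex ey c o; lia.
      by clear -ex ey c d tx ty; lia.
    split => //; clear -ex ey c d o tx ty.
    rewrite /=; case: ifP => d'; congr pair; lia.
  + have ex : (2 * ((x - 3 * y + (3 * y - x)) %/ 2) = 3 * y - x)%N by clear -o c; lia.
    have ey : (2 * ((x + y) %/ 2) = x + y)%N by clear -o; lia.
    move: ex ey; move: ((x - 3 * y + (3 * y - x)) %/ 2) ((x + y) %/ 2) => u v ex ey.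
    have [f1 f2 f3] : [/\ (u < b.+1)%N, (v < b.+1)%N & PW (24 * m + 7) u v].
      apply: PW_of => //; first by rewrite -hM; clear -ex ey c; nia.
      by clear -ex ey c o; lia.
      by clear -ex ey c d tx ty; lia.
    split => //; clear -ex ey c d o tx ty.
    rewrite /=; case: ifP => d'; congr pair; lia.
Qed.

Lemma h1_nofix m x y : PW (24 * m + 7) x y -> h1 x y != (x, y).
Proof.
move=> hP; have tx := PW_x3 hP.
move: hP => /andP[/andP[/eqP o ty] /eqP hM].
apply/eqP; rewrite /h1 /ad; case: ifP => d [h3 h4].
- have xy : x = (3 * y)%N by lia.
  subst x; move: hM; rewrite expnMn; move: (y ^ 2) => s; lia.
- have xy : x = y by lia.
  subst x; have := sq8 y; move: hM; move: (y ^ 2) => s.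
  case: (odd y); case: (y %% 4 == 2) => /=; lia.
Qed.

Lemma R_to_W m u v : coprime u 6 -> coprime v 6 -> (3 * e u + 4 * e v = m)%N ->
  ((4 * v) ^ 2 + 3 * (2 * u) ^ 2 = 4 * (24 * m + 7))%N.
Proof.
move=> cu cv h; have := sq24 cu; have := sq24 cv; rewrite !expnMn.
move: (u ^ 2) (v ^ 2) => s t; lia.
Qed.

Lemma W_to_R m X Y : PW (24 * m + 7) X Y -> ~~ odd X ->
  exists u v, [/\ X = (4 * v)%N, Y = (2 * u)%N, coprime u 6, coprime v 6 & (3 * e u + 4 * e v = m)%N].
Proof.
move=> hP; have tX := PW_x3 hP; move: hP => /andP[/andP[/eqP o ty] /eqP hM] eX.
have [a ha] : exists a, X = (2 * a)%N by exists (X %/ 2); lia.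
have [b hb] : exists b, Y = (2 * b)%N by exists (Y %/ 2); lia.
subst X Y; move: hM; rewrite !expnMn => hM.
have hK : (a ^ 2 + 3 * b ^ 2 = 24 * m + 7)%N by lia.
have [ob a4] : odd b /\ (a %% 4 = 2)%N.
  have := sq8 a; have := sq8 b; move: hK; move: (a ^ 2) (b ^ 2) => s t.
  case E1: (odd a); case E2: (odd b); case E3: (a %% 4 == 2); case E4: (b %% 4 == 2) => /=; lia.
have [v hv] : exists v, a = (2 * v)%N by exists (a %/ 2); lia.
subst a; exists b, v.
have cb : coprime b 6 by rewrite cop6E ob /=; lia.
have cv : coprime v 6 by rewrite cop6E; apply/andP; split; lia.
split => //; first by lia.
have := sq24 cb; have := sq24 cv; move: hK; rewrite expnMn; move: (b ^ 2) (v ^ 2) => s t; lia.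
Qed.

End Mod_H.
Import Mod_H.

Module Mod_I.
Local Open Scope ring_scope.

Lemma S1 m b : (4 * (24 * m + 7) < b.+1 ^ 2)%N ->
  (Er b.+1 1 * Er b.+1 3)`_(4 * m + 1) = (Er b.+1 3 * Er b.+1 4)`_m.
Proof.
move=> hb; rewrite /Er !mul_sumX !coef_sumX natF2 [in RHS]natF2; congr (_%:R).
set K := (24 * m + 7)%N.
set W := [set z : 'I_b.+1 * 'I_b.+1 | PW K z.1 z.2].
set Od := [set z : 'I_b.+1 * 'I_b.+1 | odd z.1].
have hW : odd #|W| = false.
  rewrite /W (@invol_nat b (PW K) h1); last by move=> x y; apply: h1_ok.
  rewrite (_ : [set _ | _] = set0) ?cards0 //.
  by apply/setP => z; rewrite !inE; case: (boolP (PW K _ _)) => //= /h1_nofix /negbTE.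
have eL : [set z : 'I_b.+1 * 'I_b.+1 | coprime z.1 6 && coprime z.2 6 & (1 * e z.1 + 3 * e z.2 == 4 * m + 1)%N]
   = W :&: Od.
  apply/setP => -[x y]; rewrite !inE /=; apply/idP/idP.
    move=> /andP[/andP[cx cy] /eqP h].
    have := sq24 cx; have := sq24 cy; rewrite cop6E in cx; rewrite cop6E in cy.
    move: cx cy => /andP[ox tx] /andP[oy ty].
    rewrite /PW ox oy ty /=; move: h; move: (e x) (e y) ((val x) ^ 2)%N ((val y) ^ 2)%N => a c s t.
    move=> h h1 h2; apply/eqP; rewrite /K; lia.
  move=> /andP[hP ox]; have tx := PW_x3 hP; move: hP => /andP[/andP[/eqP o ty] /eqP hM].
  have cx : coprime x 6 by rewrite cop6E ox tx.
  have cy : coprime y 6 by rewrite cop6E -o ox ty.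
  rewrite cx cy /=; have := sq24 cx; have := sq24 cy; move: hM.
  move: (e x) (e y) ((val x) ^ 2)%N ((val y) ^ 2)%N => a c s t.
  by move=> h h1 h2; apply/eqP; rewrite /K in h; lia.
set Rs := [set z : 'I_b.+1 * 'I_b.+1 | coprime z.1 6 && coprime z.2 6 & (3 * e z.1 + 4 * e z.2 == m)%N].
have bnd : forall z, z \in Rs -> (4 * z.2 < b.+1)%N /\ (2 * z.1 < b.+1)%N.
  move=> z; rewrite inE => /andP[/andP[cu cv] /eqP h]; have := R_to_W cu cv h => hh.
  split; apply: sq_lt; apply: leq_ltn_trans hb; rewrite /K in hh *; move: hh;
    move: ((4 * z.2) ^ 2)%N ((2 * z.1) ^ 2)%N => s t; lia.
pose f (z : 'I_b.+1 * 'I_b.+1) : 'I_b.+1 * 'I_b.+1 := (inord (4 * z.2), inord (2 * z.1)).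
have eR : #|Rs| = #|W :\: Od|.
  rewrite -(card_in_imset (f := f)); last first.
    move=> z z' zR z'R [] h1 h2.
    have [b1 b2] := bnd _ zR; have [b1' b2'] := bnd _ z'R.
    move: h1 h2; rewrite /f /=.
    move=> /(congr1 (@nat_of_ord _)) h1 /(congr1 (@nat_of_ord _)) h2; rewrite !inordK // in h1 h2.
    by apply: injective_projections; apply: ord_inj; lia.
  apply: eq_card => w; apply/imsetP/idP.
    move=> [z zR ->]; have [b1 b2] := bnd _ zR.
    move: zR; rewrite !inE /f /= !inordK // => /andP[/andP[cu cv] /eqP h].
    rewrite /PW !oddM /=; have hh := R_to_W cu cv h; rewrite /K hh eqxx andbT.
    by move: cu; rewrite cop6E => /andP[_ t]; clear -t; lia.
  rewrite !inE => /andP[nodd hP].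
  have [u [v [eX eY cu cv h]]] := W_to_R hP nodd.
  have hu : (u < b.+1)%N by have := ltn_ord w.2; rewrite eY; lia.
  have hv : (v < b.+1)%N by have := ltn_ord w.1; rewrite eX; lia.
  exists (inord u, inord v).
    by rewrite inE /= !inordK // cu cv h eqxx.
  rewrite /f /= !inordK // -eX -eY !inord_val.
  by case: w {nodd hP eX eY}.
rewrite eL eR; move: hW; rewrite -(cardsID Od W) oddD.
by case: (odd #|W :&: Od|); case: (odd #|W :\: Od|).
Qed.

End Mod_I.
Import Mod_I.

Module Mod_J.
Local Open Scope ring_scope.

Lemma oddF2 k : ((k%:R : F2) = 0) -> ~~ odd k.
Proof. by rewrite natF2; case: (odd k) => //= /eqP. Qed.

Lemma intF2_dvd (z : int) : (z%:~R : F2) = 0 -> (2 %| z)%Z.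
Proof.
rewrite dvdzE; case: z => k.
  by rewrite pmulrn => /oddF2; rewrite /= dvdn2.
rewrite NegzE mulrNz pmulrn => /eqP; rewrite oppr_eq0 => /eqP /oddF2.
by rewrite abszN /= dvdn2.
Qed.

Definition Tr N (s : nat -> int) : {poly F2} := \poly_(i < N) ((s i)%:~R).
Lemma coef_Tr N s i : (i < N)%N -> (Tr N s)`_i = (s i)%:~R.
Proof. by move=> h; rewrite coef_poly h. Qed.

Lemma Tr_smul N s t : eqN N (Tr N (smul s t)) (Tr N s * Tr N t).
Proof.
move=> i hi; rewrite coef_Tr // coefM /smul rmorph_sum; apply: eq_bigr => j _.
rewrite rmorphM coef_Tr; last by apply: leq_ltn_trans hi; rewrite -ltnS.
by rewrite coef_Tr //; apply: leq_ltn_trans hi; apply: leq_subr.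
Qed.

Definition Fr N r : {poly F2} := \prod_(k < N) (1 - 'X^(r * k.+1)).

Lemma Fr_trunc r i j : (0 < r)%N -> (i < j)%N -> (Fr j r)`_i = (Fr i.+1 r)`_i.
Proof.
move=> hr; elim: j => // j IH; rewrite ltnS leq_eqVlt => /orP[/eqP -> // | hij].
rewrite /Fr big_ord_recr /= coef_trunc; first exact: IH.
by clear IH; nia.
Qed.

Lemma Tr_fr N r : (0 < r)%N -> eqN N (Tr N (fr r)) (Fr N r).
Proof.
move=> hr i hi; rewrite coef_Tr // /fr -coef_map rmorph_prod.
rewrite (@Fr_trunc r i N) // /Fr; apply: (congr1 (fun p : {poly F2} => p`_i)); apply: eq_bigr => k _.
by rewrite rmorphB rmorph1 rmorphXn /= map_polyX.
Qed.

Lemma Fr_sq N r : (Fr N r) ^+ 2 = Fr N (2 * r).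
Proof.
rewrite /Fr sqr_prod2; apply: eq_bigr => k _.
rewrite -[1 - _]/(1 + - 'X^(r * k.+1)) sqrD2 sqrrN expr1n -exprM opp2.
by congr (_ + 'X^_); lia.
Qed.

Lemma Fr_comp N r : Fr N r = Fr N 1 \Po 'X^r.
Proof.
rewrite /Fr rmorph_prod; apply: eq_bigr => k _.
by rewrite rmorphB rmorph1 rmorphXn /= comp_polyX -exprM mul1n.
Qed.

Lemma Er_comp b r : Er b r = Er b 1 \Po 'X^r.
Proof.
rewrite /Er rmorph_sum; apply: eq_bigr => k _.
by rewrite rmorphXn /= comp_polyX -exprM mul1n.
Qed.

Lemma Er_sq b r : (Er b r) ^+ 2 = Er b (2 * r).
Proof.
rewrite /Er sqr_sum2; apply: eq_bigr => k _.
by rewrite -exprM; congr ('X^_); lia.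
Qed.

Lemma Fr0 N r : (0 < r)%N -> (Fr N r)`_0 = 1.
Proof.
move=> hr; rewrite /Fr coef0_prod; apply: big1 => k _.
rewrite coefB coef1 coefXn /= (_ : (0 == r * k.+1)%N = false) ?subr0 //; lia.
Qed.

End Mod_J.
Import Mod_J.

Module Mod_K.
Local Open Scope ring_scope.

Lemma Tr_ext N s t : (forall i, s i = t i) -> Tr N s = Tr N t.
Proof. by move=> h; apply/polyP => i; rewrite !coef_poly h. Qed.

Theorem main_aux (a : nat -> int) :
  (forall n : nat, smul (smul a (smul (fr 2) (fr 2))) (fr 3) n = smul (fr 1) (fr 6) n) ->
  forall n : nat, (2 %| a (24 * n + 13)%N)%Z.
Proof.
move=> Hyp n.
set N := (24 * n + 14)%N.
set b := (6 * N + 1)%N.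
set E := Er b.+1 1.
have hF1 : eqN N (Fr N 1) E.
  have := @euler N; rewrite /E /b (_ : (6 * N + 1).+1 = 6 * N + 2)%N; last by lia.
  move=> h; apply: (eqN_le (leqnSn N)); move=> i hi; rewrite -h // /Fr.
  by apply: (congr1 (fun p : {poly F2} => p`_i)); apply: eq_bigr => k _; rewrite mul1n.
set F1 := Fr N 1.
have hT : eqN N (Tr N a * (Fr N 2 * Fr N 2) * Fr N 3) (F1 * Fr N 6).
  apply: (@eqN_trans _ _ _ (Tr N (smul (smul a (smul (fr 2) (fr 2))) (fr 3)))).
    apply: eqN_sym; apply: eqN_trans; first by apply: Tr_smul.
    apply: eqN_mul; last by apply: Tr_fr.
    apply: eqN_trans; first by apply: Tr_smul.
    apply: eqN_mul => //; apply: eqN_trans; first by apply: Tr_smul.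
    by apply: eqN_mul; apply: Tr_fr.
  rewrite (Tr_ext N Hyp); apply: eqN_trans; first by apply: Tr_smul.
  by apply: eqN_mul; apply: Tr_fr.
have F2e : Fr N 2 = F1 ^+ 2 by rewrite Fr_sq.
have F6e : Fr N 6 = Fr N 3 ^+ 2 by rewrite Fr_sq.
have F3c : Fr N 3 = F1 \Po 'X^3 by rewrite Fr_comp.
have F4 : F1 ^+ 4 = F1 \Po 'X^4.
  by rewrite (_ : 4 = 2 * 2)%N // exprM Fr_sq Fr_sq -Fr_comp.
rewrite F2e F6e in hT.
have h1 : eqN N (Tr N a * F1 ^+ 3) (Fr N 3).
  apply: (@eqN_cancel _ _ _ _ (F1 * Fr N 3)).
    by rewrite coef0M !Fr0 // mulr1.
  have e1 : Tr N a * (F1 ^+ 2 * F1 ^+ 2) * Fr N 3 = Tr N a * F1 ^+ 3 * (F1 * Fr N 3) by ring.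
  have e2 : F1 * Fr N 3 ^+ 2 = Fr N 3 * (F1 * Fr N 3) by ring.
  by rewrite -e1 -e2.
have hA : eqN N (Tr N a * (F1 \Po 'X^4)) (F1 * (F1 \Po 'X^3)).
  have := eqN_mul h1 (@eqN_refl _ N F1); rewrite -F4 -F3c.
  have -> : Tr N a * F1 ^+ 3 * F1 = Tr N a * F1 ^+ 4 by ring.
  by rewrite [Fr N 3 * F1]mulrC.
have hB : eqN N (Tr N a * (E \Po 'X^4)) (E * (E \Po 'X^3)).
  apply: (@eqN_trans _ _ _ (F1 * (F1 \Po 'X^3))); last first.
    by apply: eqN_mul; [exact: hF1 | apply: eqN_comp].
  apply: (@eqN_trans _ _ _ (Tr N a * (F1 \Po 'X^4))); last exact: hA.
  by apply: eqN_mul => //; apply: eqN_comp => //; apply: eqN_sym.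
have E0 : E`_0 = 1 by rewrite -hF1 ?Fr0 //; lia.
have E3 : Er b.+1 3 = E \Po 'X^3 by rewrite Er_comp.
have E2 : E ^+ 2 = Er b.+1 2 by rewrite Er_sq.
have E4 : E ^+ 4 = Er b.+1 4.
  by rewrite (_ : 4 = 2 * 2)%N // exprM E2 Er_sq.
set a1 := sect 4 1 (Tr N a).
set M := (6 * n + 4)%N.
have hC : eqN M (a1 * E) (Er b.+1 3 * E ^+ 4).
  move=> i hi; rewrite -sect_mul // hB; last by rewrite /N /M in hi *; lia.
  rewrite E4 -E3 S1 //; rewrite /b /N /M in hi *; nia.
have hD : eqN M a1 (Er b.+1 3 * E ^+ 3).
  apply: (eqN_cancel E0).
  by rewrite (_ : Er b.+1 3 * E ^+ 3 * E = Er b.+1 3 * E ^+ 4) //; ring.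
have key : a1`_(3 * (2 * n + 1) + 0) = 0.
  rewrite hD; last by rewrite /M; lia.
  rewrite (_ : E ^+ 3 = E * Er b.+1 2); last by rewrite -E2; ring.
  rewrite E3 mulrC sect_mul // coefM.
  rewrite (_ : \sum_(j < (2 * n + 1).+1) (sect 3 0 (E * Er b.+1 2))`_j * E`_(2 * n + 1 - j)
     = \sum_(j < (2 * n + 1).+1) E`_j * E`_(2 * n + 1 - j)); last first.
    apply: eq_bigr => j _; rewrite coef_sect // addn0 S2 //.
    have := ltn_ord j; rewrite /b /N; nia.
  rewrite -coefM -expr2 E2 /Er coef_sumX.
  rewrite (_ : [set _ | _] = set0) ?cards0 //.
  by apply/setP => x; rewrite !inE; apply/negbTE; rewrite negb_and; apply/orP; right; lia.
move: key; rewrite /a1 addn0 coef_sect // coef_Tr; last by rewrite /N; lia.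
rewrite (_ : (4 * (3 * (2 * n + 1)) + 1 = 24 * n + 13)%N); last by lia.
exact: intF2_dvd.
Qed.

End Mod_K.
Import Mod_K.

Unset Implicit Arguments.
Local Open Scope ring_scope.

(* a is the (unique) power series with a * f_2^2 * f_3 = f_1 * f_6,
   i.e. sum a(n) q^n = f_1 f_6 / (f_2^2 f_3). *)
Theorem mainTheorem4 (a : nat -> int) :
  (forall n : nat, smul (smul a (smul (fr 2) (fr 2))) (fr 3) n = smul (fr 1) (fr 6) n) ->
  forall n : nat, (2 %| a (24 * n + 13)%N)%Z.
Proof.
exact: main_aux.
Qed.
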